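(* If the feasibility requirement of an abstract network design problem $P$ is memoryless, then $P$ admits a min operator (with factor $O(1)$).
   Context: Abstract network design: instance = connected graph $G=(V,E)$ with edge lengths $d\ge0$, online requests $Z_i\subseteq V$; with $\mathcal Z_i=\bigcup_{j\le i}Z_j$ the algorithm irrevocably outputs at step $i$ a response $(R_i,C_i)$, $R_i\subseteq E$, $C_i$ an ordered list of pairs of $\binom{\mathcal Z_i}{2}$. Feasibility functions $\mathcal F_i$ map $(C_1,\ldots,C_i)$ to $\{0,1\}$; a solution is feasible iff $\mathcal F_i(C_1,\ldots,C_i)=1$ and each pair of $C_j$ is connected in $R_j$, $j\le i$; it must be feasible at every step. Load function $\rho$ on sets of time steps: subadditive, monotone increasing, zero exactly on $\emptyset$; cost $=\sum_e d(e)\rho(\{j:e\in R_j\})$. The feasibility function is memoryless if whenever $\mathcal F_i(C_1,\ldots,C_i)=1$, then for all $(C'_1,\ldots,C'_{i-1})$ with $\mathcal F_{i-1}(C'_1,\ldots,C'_{i-1})=1$ we have $\mathcal F_i(C'_1,\ldots,C'_{i-1},C_i)=1$. $P$ admits a min operator with factor $\eta$ if for any two deterministic online algorithms $A,B$ there is a deterministic online algorithm $C$ with $\mathrm{cost}(C)\le\eta\min\{\mathrm{cost}(A),\mathrm{cost}(B)\}$ on every request sequence; ''admits a min operator'' means with $\eta=O(1)$. *)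

(* Defs.v *)
From HB Require Import structures.
From mathcomp Require Import all_boot all_order all_algebra.
Set Implicit Arguments. Unset Strict Implicit. Unset Printing Implicit Defensive.
Import Order.TTheory GRing.Theory Num.Theory.
Local Open Scope ring_scope.

Section AbstractNetworkDesign.
Variable R : realFieldType.

(* An instance: a graph with vertex set 'I_nv, edge set 'I_ne (multigraph,
   edge e joins the endpoints [ends e]) and edge lengths [len]. *)
Record instance := Instance {
  nv : nat;
  ne : nat;
  ends : 'I_ne -> 'I_nv * 'I_nv;
  len : 'I_ne -> R }.

Definition vtx (I : instance) := 'I_(nv I).
Definition edge (I : instance) := 'I_(ne I).

Definition graph_adj (I : instance) (S : {set edge I}) : rel (vtx I) :=
  fun u v => [exists e in S, (ends e == (u, v)) || (ends e == (v, u))].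

Definition valid_instance (I : instance) : Prop :=
  (forall u v : vtx I, connect (graph_adj [set: edge I]) u v) /\
  (forall e : edge I, 0 <= len e).

Definition response (I : instance) :=
  ({set edge I} * seq (vtx I * vtx I))%type.

(* A deterministic online algorithm: on instance I, after having received the
   requests Z_1, ..., Z_i (the list Zs of length i), it outputs the response
   of step i.  Earlier outputs are determined by earlier prefixes. *)
Definition algorithm := forall I : instance, seq {set vtx I} -> response I.

(* A problem: feasibility functions F_i (F_i(C_1..C_i) = feas I [Z_1..Z_i]
   [C_1..C_i]) and a load function rho on sets of time steps. *)
Record problem := Problem {
  feas : forall I : instance, seq {set vtx I} -> seq (seq (vtx I * vtx I)) -> bool;
  load : pred nat -> R }.

Definition load_function (rho : pred nat -> R) : Prop :=
  (forall S T : pred nat, rho (fun x => S x || T x) <= rho S + rho T) /\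
  (forall S T : pred nat, (forall x, S x -> T x) -> rho S <= rho T) /\
  (forall S : pred nat, rho S = 0 <-> (forall x, ~~ S x)).

Definition requested (I : instance) (Zs : seq {set vtx I}) : {set vtx I} :=
  \bigcup_(Z <- Zs) Z.

Definition valid_pairs (I : instance) (Zs : seq {set vtx I})
    (C : seq (vtx I * vtx I)) : bool :=
  all (fun p => [&& p.1 != p.2, p.1 \in requested Zs & p.2 \in requested Zs]) C.

Definition pairs_connected (I : instance) (Rj : {set edge I})
    (C : seq (vtx I * vtx I)) : bool :=
  all (fun p => connect (graph_adj Rj) p.1 p.2) C.

(* output of A at (1-based) step j on request sequence Zs *)
Definition out (A : algorithm) (I : instance) (Zs : seq {set vtx I}) (j : nat)
  : response I := A I (take j Zs).

Definition feasible_upto (P : problem) (A : algorithm) (I : instance)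
    (Zs : seq {set vtx I}) : Prop :=
  forall i : nat, (1 <= i <= size Zs)%N ->
    [&& feas P (take i Zs) [seq (out A Zs j).2 | j <- iota 1 i],
        valid_pairs (take i Zs) (out A Zs i).2
      & pairs_connected (out A Zs i).1 (out A Zs i).2]%N.

Definition valid_alg (P : problem) (A : algorithm) : Prop :=
  forall I : instance, valid_instance I ->
    forall Zs : seq {set vtx I}, feasible_upto P A Zs.

Definition cost (P : problem) (A : algorithm) (I : instance)
    (Zs : seq {set vtx I}) : R :=
  \sum_(e : edge I)
     len e * load P (fun j => (1 <= j <= size Zs)%N && (e \in (out A Zs j).1)).

Definition memoryless (P : problem) : Prop :=
  forall I : instance, valid_instance I ->
  forall (Zs : seq {set vtx I}) (Cs Cs' : seq (seq (vtx I * vtx I))),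
    (2 <= size Zs)%N -> size Cs = size Zs -> size Cs' = (size Zs).-1 ->
    feas P Zs Cs -> feas P (take (size Zs).-1 Zs) Cs' ->
    feas P Zs (rcons Cs' (last [::] Cs)).

Definition min_operator (P : problem) (eta : R) : Prop :=
  forall A B : algorithm, valid_alg P A -> valid_alg P B ->
  exists C : algorithm, valid_alg P C /\
    forall I : instance, valid_instance I -> forall Zs : seq {set vtx I},
      cost P C Zs <= eta * Num.min (cost P A Zs) (cost P B Zs).

Definition admits_min_operator (P : problem) : Prop :=
  exists eta : R, min_operator P eta.

End AbstractNetworkDesign.

(* Main.v *)
Require Import Defs.
From mathcomp Require Import all_boot all_order all_algebra.
From mathcomp Require Import lra zify.
Set Implicit Arguments. Unset Strict Implicit. Unset Printing Implicit Defensive.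
Import Order.TTheory GRing.Theory Num.Theory.
Local Open Scope ring_scope.

Section Abs.
Variables (R : realFieldType) (E : finType) (len : E -> R) (rho : pred nat -> R).
Hypothesis Hrho : load_function rho.
Hypothesis Hlen : forall e, 0 <= len e.

Definition K (f : nat -> {set E}) (i : nat) : R :=
  \sum_(e : E) len e * rho (fun j => (1 <= j <= i)%N && (e \in f j)).

Lemma rho_mono (S T : pred nat) : (forall x, S x -> T x) -> rho S <= rho T.
Proof. by case: Hrho => _ [H _]; apply: H. Qed.

Lemma rho_ext (S T : pred nat) : (forall x, S x = T x) -> rho S = rho T.
Proof.
move=> h; apply/le_anti; rewrite !rho_mono // => x; by rewrite h.
Qed.

Lemma rho0 (S : pred nat) : (forall x, ~~ S x) -> rho S = 0.
Proof. by case: Hrho => _ [_ H] h; apply/H. Qed.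

Lemma rho_ge0 S : 0 <= rho S.
Proof.
rewrite -(rho0 (S := fun _ => false)) //; exact: rho_mono.
Qed.

Lemma K_ge0 f i : 0 <= K f i.
Proof. apply: sumr_ge0 => e _; apply: mulr_ge0 => //; exact: rho_ge0. Qed.

Lemma K0 f : K f 0 = 0.
Proof.
apply: big1 => e _; rewrite rho0 ?mulr0 // => x; by case: x.
Qed.

Lemma K_mono f i i' : (i <= i')%N -> K f i <= K f i'.
Proof.
move=> h; apply: ler_sum => e _; apply: ler_wpM2l => //; apply: rho_mono.
move=> x /andP[/andP[h1 h2] h3]; rewrite h3 h1 andbT /=; exact: leq_trans h2 h.
Qed.

Lemma K_ext f g i : (forall j, (1 <= j <= i)%N -> f j = g j) -> K f i = K g i.
Proof.
move=> h; apply: eq_bigr => e _; congr (_ * _); apply: rho_ext => x.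
by case hx: (1 <= x <= i)%N => //=; rewrite h.
Qed.

Lemma K_split (f g : nat -> {set E}) (p i : nat) :
  (forall e j, (1 <= j <= i)%N -> e \in f j -> (j <= p)%N \/ e \in g j) ->
  K f i <= K f p + K g i.
Proof.
move=> h; rewrite /K -big_split /=; apply: ler_sum => e _; rewrite -mulrDr.
apply: ler_wpM2l => //.
case: Hrho => Hs _.
apply: le_trans (Hs _ _); apply: rho_mono => x /andP[hx he].
case: (h e x hx he) => [hp|hg].
  by rewrite he andbT; case/andP: hx => -> _; rewrite hp.
by rewrite hx hg orbT.
Qed.

Variables (fA fB : nat -> {set E}).
Definition fs (b : bool) := if b then fA else fB.
Variables (s : nat -> bool) (n : nat).
Hypothesis s0 : s 0 = true.
Hypothesis sS : forall i, (i < n)%N -> s i.+1 =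
  if 2 * K (fs (~~ s i)) i.+1 < K (fs (s i)) i.+1 then ~~ s i else s i.
Definition fC j := fs (s j) j.

Lemma inv i : (i <= n)%N ->
  K (fs (s i)) i <= 2 * K (fs (~~ s i)) i /\
  exists p h, [/\ (p <= i)%N,
    (forall e j, (1 <= j <= i)%N -> e \in fC j -> (j <= p)%N \/ e \in fs (s i) j),
    K fC p <= 4 * h, h <= K (fs (s i)) i & 2 * h <= K (fs (~~ s i)) i].
Proof.
elim: i => [|i IH] hi.
  rewrite !K0; split; first lra.
  exists 0%N, 0; rewrite !K0 mulr0; split => //.
  - move=> e j /andP[h1 h2]; lia.
  - by rewrite mulr0.
have [Hr [p [h [hp Hinc Hc Hh1 Hh2]]]] := IH (ltnW hi).
have := sS hi; set X := s i => sX.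
have gA := K_ge0; have mA := K_mono.
case: ifP sX => hc sX; rewrite sX ?negbK.
- have m1 := mA (fs X) _ _ (leqnSn i).
  have m2 := mA (fs (~~ X)) _ _ (leqnSn i).
  have g1 := gA (fs X) i.+1. have g2 := gA (fs (~~ X)) i.+1.
  split; first lra.
  exists i, (K (fs (~~ X)) i.+1); split => //.
  + move=> e j hj; rewrite /fC.
    case: (ltnP i j) => hij; last by left.
    have -> : j = i.+1 by lia.
    by rewrite sX; right.
  + have := K_split (g := fs X) (p := p) (i := i) Hinc.
    lra.
  + lra.
- have m1 := mA (fs X) _ _ (leqnSn i).
  have m2 := mA (fs (~~ X)) _ _ (leqnSn i).
  split; first by rewrite leNgt hc.
  exists p, h; split => //; first by lia.
  + move=> e j hj; rewrite /fC.
    case: (ltnP i j) => hij.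
      have -> : j = i.+1 by lia.
      by rewrite sX; right.
    move=> he; have hj' : (1 <= j <= i)%N by lia.
    by case: (Hinc e j hj' he) => [?|?]; [left | right].
  + lra.
  + lra.
Qed.

Lemma key : K fC n <= 5 * Num.min (K fA n) (K fB n).
Proof.
have [Hr [p [h [hp Hinc Hc Hh1 Hh2]]]] := inv (leqnn n).
have := K_split (g := fs (s n)) (p := p) (i := n) Hinc.
have g1 := K_ge0 (fs (s n)) n. have g2 := K_ge0 (fs (~~ s n)) n.
move: Hr Hh1 Hh2; case: (s n) => /= Hr Hh1 Hh2 Hs;
rewrite /Num.min; case: ifP => _; lra.
Qed.

End Abs.

Section Main.
Variables (R : realFieldType) (P : problem R) (A B : algorithm R).
Hypothesis Hrho : load_function (load P).

Definition sel (b : bool) : algorithm R := if b then A else B.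

Fixpoint st (I : instance R) (Zs : seq {set vtx I}) (i : nat) : bool :=
  match i with
  | 0 => true
  | i'.+1 => let X := st Zs i' in
      if 2 * cost P (sel (~~ X)) (take i'.+1 Zs) < cost P (sel X) (take i'.+1 Zs)
      then ~~ X else X
  end.

Definition Calg : algorithm R := fun I Zs => sel (st Zs (size Zs)) Zs.

Lemma st_take I (Zs : seq {set vtx I}) j k : (k <= j)%N -> st (take j Zs) k = st Zs k.
Proof.
elim: k => [//|k IH] hk /=.
by rewrite IH ?(ltnW hk) // take_takel.
Qed.

Lemma outC I (Zs : seq {set vtx I}) j : (j <= size Zs)%N ->
  out Calg Zs j = out (sel (st Zs j)) Zs j.
Proof. by move=> hj; rewrite /out /Calg size_takel // st_take. Qed.

Lemma cost_take I (Zs : seq {set vtx I}) (X : algorithm R) i : (i <= size Zs)%N ->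
  cost P X (take i Zs) = K (@len R I) (load P) (fun j => (out X Zs j).1) i.
Proof.
move=> hi; rewrite /cost /K size_takel //; apply: eq_bigr => e _; congr (_ * _).
apply: (rho_ext Hrho) => x.
case hx: (1 <= x <= i)%N => //=.
by rewrite /out take_takel //; case/andP: hx.
Qed.

Lemma costC I (HI : valid_instance I) (Zs : seq {set vtx I}) :
  cost P Calg Zs <= 5 * Num.min (cost P A Zs) (cost P B Zs).
Proof.
have e X : cost P X Zs = cost P X (take (size Zs) Zs) by rewrite take_size.
rewrite !(e A) !(e B) (e Calg) !cost_take //.
rewrite (@K_ext _ _ _ _ Hrho _ (fC (fun j => (out A Zs j).1) (fun j => (out B Zs j).1) (st Zs))).
  apply: key => //; first by case: HI.
  move=> i hi /=; rewrite !cost_take //.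
  by case: (st Zs i).
move=> j hj; rewrite /fC outC; last by case/andP: hj.
by case: (st Zs j).
Qed.

Lemma iota_last (T : Type) (f : nat -> T) i :
  [seq f j | j <- iota 1 i.+1] = rcons [seq f j | j <- iota 1 i] (f i.+1).
Proof.
have -> : iota 1 i.+1 = rcons (iota 1 i) i.+1.
  by have := iotaD 1 i 1; rewrite addn1 add1n => ->; rewrite cats1.
by rewrite map_rcons.
Qed.

Lemma feasC (Hml : memoryless P) (HA : valid_alg P A) (HB : valid_alg P B) :
  valid_alg P Calg.
Proof.
move=> I HI Zs.
have Hsel b : feasible_upto P (sel b) Zs by case: b; [apply: HA | apply: HB].
have Hf : forall i, (1 <= i <= size Zs)%N ->
    feas P (take i Zs) [seq (out Calg Zs j).2 | j <- iota 1 i].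
  elim => [|i IH] /andP[h1 h2]; first done.
  have /and3P[hf _ _] := Hsel (st Zs i.+1) i.+1 (ltac:(lia)).
  rewrite iota_last outC //.
  move: IH h1 h2 hf; case: i => [|i] IH _ h2 hf; first by [].
  have H := Hml I HI (take i.+2 Zs)
    [seq (out (sel (st Zs i.+2)) Zs j).2 | j <- iota 1 i.+2]
    [seq (out Calg Zs j).2 | j <- iota 1 i.+1].
  rewrite size_takel // !size_map !size_iota take_takel // in H.
  have := H isT erefl erefl hf (IH ltac:(lia)).
  by rewrite [X in last _ X]iota_last last_rcons.
move=> i hi; rewrite Hf // outC; last by case/andP: hi.
by have /and3P[_ -> ->] := Hsel (st Zs i) i hi.
Qed.

End Main.

Theorem corollaryC4 (R : realFieldType) (P : problem R) :
  load_function (load P) -> memoryless P -> admits_min_operator P.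
Proof.
move=> Hrho Hml; exists 5 => A B HA HB.
exists (Calg P A B); split; first exact: feasC.
move=> I HI Zs; exact: costC.
Qed.
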